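(* Let $\mathcal{T}$ be a conforming simplicial mesh of a domain in $\mathbb{R}^d$ with nodes $\{\mathbf{x}_i\}$, let $F$ be a common facet of two cells $T_o$ and $T_n$, and let $\mathbf{x}^* \in F$. For a point $\mathbf{x}$ in the closure of a cell $T$, let $\mathcal{N}^1(\mathbf{x})$ be the set of 1-ring neighbours of $T$, and let $\mathcal{N}^1_o$, $\mathcal{N}^1_n$ denote these sets for $T_o$, $T_n$; put $\mathcal{N}^1_c=\mathcal{N}^1_o\cap\mathcal{N}^1_n$, $\mathcal{N}^1_r=\mathcal{N}^1_o\setminus\mathcal{N}^1_c$ (removed nodes), $\mathcal{N}^1_a=\mathcal{N}^1_n\setminus\mathcal{N}^1_c$ (added nodes). Let $d:\mathbb{R}^d\to[0,\infty)$ be a smooth compactly supported sample-weighting function and, for each node $i$, let $\eta_i$ be a diminishing function, so that the modified sample weight of node $i\in\mathcal{N}^1(\mathbf{x})$ at $\mathbf{x}$ is $d'_i(\mathbf{x})=\eta_i(\mathbf{x})\,d(\mathbf{x}_i-\mathbf{x})$. With $\mathbf{p}(\mathbf{y})=[1,\mathbf{y}^T]^T$ and fixed nodal values $u_i\in\mathbb{R}$, define $$\mathbf{M}(\mathbf{x})=\sum_{i\in\mathcal{N}^1(\mathbf{x})} d'_i(\mathbf{x})\,\mathbf{p}(\mathbf{x}_i-\mathbf{x})\mathbf{p}(\mathbf{x}_i-\mathbf{x})^T,\qquad \mathbf{b}(\mathbf{x})=\sum_{i\in\mathcal{N}^1(\mathbf{x})} d'_i(\mathbf{x})\,u_i\,\mathbf{p}(\mathbf{x}_i-\mathbf{x}),$$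 and the MLS reconstruction of the value and gradient $\begin{bmatrix}\hat u(\mathbf{x})\\ \nabla\hat u(\mathbf{x})\end{bmatrix}=\mathbf{M}(\mathbf{x})^{-1}\mathbf{b}(\mathbf{x})$. Assume: (i) for every $i\in\mathcal{N}^1_c$, $\mathbf{x}\mapsto \eta_i(\mathbf{x})d(\mathbf{x}_i-\mathbf{x})$ is smooth (in particular continuous) on a neighbourhood of $\mathbf{x}^*$ in $T_o\cup T_n$; (ii) $\eta$ is locally diminishing: there is $K>0$ such that $|\eta_i(\mathbf{x})|\le K\,\|\mathbf{x}-\mathbf{x}^*\|$ for $i\in\mathcal{N}^1_r$, $\mathbf{x}\in T_o$ and for $i\in\mathcal{N}^1_a$, $\mathbf{x}\in T_n$, near $\mathbf{x}^*$; (iii) the nodes are non-degenerate near $\mathbf{x}^*$, i.e. the minimum singular value of $\mathbf{M}(\mathbf{x})$ is bounded away from $0$ for $\mathbf{x}\in T_o\cup T_n$ near $\mathbf{x}^*$. Then both the reconstructed value $\hat u$ and the reconstructed gradient $\nabla\hat u$ are continuous across $F$ at $\mathbf{x}^*$: if $\mathbf{x}^o\in T_o$ and $\mathbf{x}^n\in T_n$ with $\|\mathbf{x}^n-\mathbf{x}^o\|=\mathcal{O}(\epsilon)$ near $\mathbf{x}^*$, then the difference of $[\hat u,\nabla\hat u^T]^T$ at $\mathbf{x}^n$ (computed with $\mathcal{N}^1_n$) and at $\mathbf{x}^o$ (computed with $\mathcal{N}^1_o$) is $\mathcal{O}(\epsilon)$. In particular, the MLS kernel values and kernel gradients (the rows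 of $\mathbf{M}^{-1}$ times the weighted basis, i.e. the case of unit nodal values $u_i=\delta_{ij}$) are continuous across cell boundaries.
   Context: The 0-ring neighbours $\mathcal{N}^0$ of a cell are its vertices; the 1-ring neighbours $\mathcal{N}^1$ of a cell are all mesh nodes that are vertices of the cell or are joined by a mesh edge to a vertex of the cell (so $\mathcal{N}^0\subset\mathcal{N}^1$). When a point moves from $T_o$ into $T_n$ through $F$, the active node set changes from $\mathcal{N}^1_o$ to $\mathcal{N}^1_n$. This is the moving-least-squares (MLS) reconstruction with complete linear polynomial basis used in the Unstructured MLS Material Point Method, with sample weights multiplied by a diminishing function $\eta$. *)

(* Defs.v *)
From HB Require Import structures.
From mathcomp Require Import all_boot all_order all_algebra.
From mathcomp Require Import all_classical all_reals all_analysis.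
Set Implicit Arguments. Unset Strict Implicit. Unset Printing Implicit Defensive.
Import Order.TTheory GRing.Theory Num.Theory.
Import numFieldNormedType.Exports.
Local Open Scope classical_set_scope.
Local Open Scope ring_scope.

Section Defs.
Variables (R : realType) (d N : nat).
Implicit Types (xs : 'I_N -> 'rV[R]_d) (cells : {set {set 'I_N}}) (S : {set 'I_N}).

Definition enormr (x : 'rV[R]_d) : R := Num.sqrt (\sum_j x 0 j ^+ 2).
Definition enormc n (v : 'cV[R]_n) : R := Num.sqrt (\sum_i v i 0 ^+ 2).

(** Geometry of the simplicial mesh. A cell is given by its set of vertex
    indices; the (open) cell is the interior of the convex hull. *)
Definition aff_indep xs S : Prop :=
  forall lam : 'I_N -> R,
    \sum_(i in S) lam i = 0 -> \sum_(i in S) lam i *: xs i = 0 ->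
    forall i, i \in S -> lam i = 0.

Definition is_simplex xs S : Prop := #|S| = d.+1 /\ aff_indep xs S.

Definition open_cell xs S : set 'rV[R]_d :=
  [set x | exists lam : 'I_N -> R, (forall i, i \in S -> 0 < lam i) /\
     \sum_(i in S) lam i = 1 /\ x = \sum_(i in S) lam i *: xs i].

Definition closed_cell xs S : set 'rV[R]_d :=
  [set x | exists lam : 'I_N -> R, (forall i, i \in S -> 0 <= lam i) /\
     \sum_(i in S) lam i = 1 /\ x = \sum_(i in S) lam i *: xs i].

(** conforming simplicial mesh: every cell is a nondegenerate d-simplex,
    every node is a vertex of some cell, and two closed cells meet exactly
    in the closed common face (empty if no common vertex). *)
Definition conforming_mesh xs cells : Prop :=
  (forall S, S \in cells -> is_simplex xs S) /\
  (forall i : 'I_N, exists2 S, S \in cells & i \in S) /\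
  (forall S S', S \in cells -> S' \in cells ->
     closed_cell xs S `&` closed_cell xs S' = closed_cell xs (S :&: S')).

(** F (vertex set So :&: Sn) is a common facet of the cells So and Sn *)
Definition common_facet cells So Sn : Prop :=
  [/\ So \in cells, Sn \in cells, So != Sn & #|So :&: Sn| = d].

Definition mesh_edge cells (i j : 'I_N) : bool :=
  (i != j) && [exists S in cells, (i \in S) && (j \in S)].

Definition ring1 cells S : {set 'I_N} :=
  [set j | [exists i in S, (j == i) || mesh_edge cells i j]].

Fixpoint Ck (k : nat) (f : 'rV[R]_d -> R) : Prop :=
  if k is k'.+1 then
    (forall x v : 'rV[R]_d, derivable f x v) /\
    (forall v : 'rV[R]_d, Ck k' (fun x => derive f x v))
  else continuous f.
Definition smooth (f : 'rV[R]_d -> R) : Prop := forall k, Ck k f.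

Definition weight_function (dw : 'rV[R]_d -> R) : Prop :=
  [/\ smooth dw, (forall y, 0 <= dw y) & compact (closure [set y | dw y != 0])].

Definition pvec (y : 'rV[R]_d) : 'cV[R]_(1 + d) := col_mx 1 y^T.

Definition mod_weight xs (dw : 'rV[R]_d -> R) (eta : 'I_N -> 'rV[R]_d -> R)
  (i : 'I_N) (x : 'rV[R]_d) : R := eta i x * dw (xs i - x).

Definition MLS_M xs dw eta (Ns : {set 'I_N}) (x : 'rV[R]_d) : 'M[R]_(1 + d) :=
  \sum_(i in Ns) mod_weight xs dw eta i x *: (pvec (xs i - x) *m (pvec (xs i - x))^T).

Definition MLS_b xs dw eta (u : 'I_N -> R) (Ns : {set 'I_N}) (x : 'rV[R]_d)
  : 'cV[R]_(1 + d) :=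
  \sum_(i in Ns) (mod_weight xs dw eta i x * u i) *: pvec (xs i - x).

(** [u_hat(x); grad u_hat(x)] = M(x)^{-1} b(x) *)
Definition MLS_recon xs dw eta u Ns x : 'cV[R]_(1 + d) :=
  invmx (MLS_M xs dw eta Ns x) *m MLS_b xs dw eta u Ns x.

End Defs.

Definition sigma_min (R : realType) n (M : 'M[R]_n) : R :=
  inf [set enormc (M *m v) | v in [set v : 'cV[R]_n | enormc v = 1]].
Arguments common_facet d {N} cells So Sn.

(* Main.v *)
Require Import Defs.
From HB Require Import structures.
From mathcomp Require Import all_boot all_order all_algebra.
From mathcomp Require Import all_classical all_reals all_analysis.
From mathcomp Require Import ring lra.
Set Implicit Arguments. Unset Strict Implicit. Unset Printing Implicit Defensive.
Import Order.TTheory GRing.Theory Num.Theory.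
Import numFieldNormedType.Exports.
Local Open Scope classical_set_scope.
Local Open Scope ring_scope.

Section Norms.
Variable R : realType.

Lemma sum_sq_le_sqsum (I : finType) (f : I -> R) :
  (forall i, 0 <= f i) -> \sum_i f i ^+ 2 <= (\sum_i f i) ^+ 2.
Proof.
move=> f0; rewrite expr2 big_distrl /=; apply: ler_sum => i _.
rewrite expr2; apply: ler_wpM2l => //.
by rewrite (bigD1 i) //= lerDl sumr_ge0.
Qed.

Lemma enormc_ge0 n (v : 'cV[R]_n) : 0 <= enormc v.
Proof. exact: sqrtr_ge0. Qed.

Lemma enormr_ge0 d (v : 'rV[R]_d) : 0 <= enormr v.
Proof. exact: sqrtr_ge0. Qed.

Lemma coord_le_enormc n (v : 'cV[R]_n) i : `|v i 0| <= enormc v.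
Proof.
rewrite /enormc -sqrtr_sqr ler_sqrt ?sumr_ge0 // => [|j _]; last exact: sqr_ge0.
by rewrite (bigD1 i) //= lerDl sumr_ge0 // => j _; exact: sqr_ge0.
Qed.

Lemma coord_le_enormr d (v : 'rV[R]_d) i : `|v 0 i| <= enormr v.
Proof.
rewrite /enormr -sqrtr_sqr ler_sqrt ?sumr_ge0 // => [|j _]; last exact: sqr_ge0.
by rewrite (bigD1 i) //= lerDl sumr_ge0 // => j _; exact: sqr_ge0.
Qed.

Lemma enormc_le_sum n (v : 'cV[R]_n) : enormc v <= \sum_i `|v i 0|.
Proof.
rewrite /enormc -(@ger0_norm _ (\sum_i `|v i 0|)) ?sumr_ge0 // -sqrtr_sqr.
rewrite ler_sqrt ?sqr_ge0 //.
apply: le_trans (sum_sq_le_sqsum _) => //.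
by apply: ler_sum => i _; rewrite real_normK // num_real.
Qed.

Lemma enormr_le_sum d (v : 'rV[R]_d) : enormr v <= \sum_i `|v 0 i|.
Proof.
rewrite /enormr -(@ger0_norm _ (\sum_i `|v 0 i|)) ?sumr_ge0 // -sqrtr_sqr.
rewrite ler_sqrt ?sqr_ge0 //.
apply: le_trans (sum_sq_le_sqsum _) => //.
by apply: ler_sum => i _; rewrite real_normK // num_real.
Qed.

Lemma enormcZ n (a : R) (v : 'cV[R]_n) : enormc (a *: v) = `|a| * enormc v.
Proof.
rewrite /enormc.
have -> : \sum_i (a *: v) i 0 ^+ 2 = a ^+ 2 * \sum_i v i 0 ^+ 2.
  by rewrite big_distrr; apply: eq_bigr => i _; rewrite mxE exprMn.
by rewrite sqrtrM ?sqr_ge0 // sqrtr_sqr.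
Qed.

Lemma enormrN d (v : 'rV[R]_d) : enormr (- v) = enormr v.
Proof. by rewrite /enormr; congr Num.sqrt; apply: eq_bigr => i _; rewrite mxE sqrrN. Qed.

Lemma enormc0 n : enormc (0 : 'cV[R]_n) = 0.
Proof.
rewrite /enormc big1 ?sqrtr0 // => i _; by rewrite mxE expr0n.
Qed.

Lemma enormc_eq0 n (v : 'cV[R]_n) : enormc v = 0 -> v = 0.
Proof.
move=> /eqP; rewrite /enormc sqrtr_eq0 => H.
have H0 : \sum_i v i 0 ^+ 2 = 0.
  by apply/eqP; rewrite eq_le H sumr_ge0 // => i _; exact: sqr_ge0.
apply/matrixP => i j; rewrite ord1 mxE.
have := coord_le_enormc v i; rewrite /enormc H0 sqrtr0 normr_le0 => /eqP //.
Qed.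

End Norms.

Section Near.
Variables (R : realType) (d : nat).
Local Notation V := 'rV[R]_d.

Lemma ball_rV (a x : V) e : 0 < e -> (forall j, `|x 0 j - a 0 j| < e) -> ball a e x.
Proof.
move=> e0 H; split => // i j; rewrite ord1 /ball /= distrC; exact: H.
Qed.

Lemma rV_ball (a x : V) e : ball a e x -> forall j, `|x 0 j - a 0 j| < e.
Proof. by case=> _ H j; have := H 0 j; rewrite /ball /= distrC. Qed.

Lemma near_enormr (a : V) (P : V -> Prop) :
  (\forall x \near a, P x) -> exists2 del : R, 0 < del & forall x, enormr (x - a) < del -> P x.
Proof.
move/nbhs_ballP => [e e0 H]; exists e => // x hx; apply: H.
apply: ball_rV => // j; apply: le_lt_trans hx.
by have := coord_le_enormr (x - a) j; rewrite !mxE.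
Qed.

Lemma near_small (a : V) (r : R) : 0 < r -> \forall x \near a, enormr (x - a) < r.
Proof.
move=> r0; apply/nbhs_ballP; exists (r / d.+1%:R).
  by rewrite /= divr_gt0 // ltr0n.
move=> x /rV_ball H; apply: le_lt_trans (enormr_le_sum _) _.
apply: (@le_lt_trans _ _ (\sum_(j < d) (r / d.+1%:R))).
  by apply: ler_sum => j _; rewrite !mxE; apply: ltW; exact: H.
rewrite sumr_const card_ord -mulrnAr gtr_pMr // -mulr_natl.
by rewrite ltr_pdivrMr ?ltr0n // mul1r ltr_nat.
Qed.

Lemma line_derive (g : V -> R) (z e : V) s : derivable g (z + s *: e) e ->
  is_derive s 1 (fun t : R => g (z + t *: e)) (derive g (z + s *: e) e).
Proof.
move=> H.
have E : (fun h : R => h^-1 *: (((fun t : R => g (z + t *: e)) \o shift s) (h *: 1) - g (z + s *: e)))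
  = (fun h : R => h^-1 *: ((g \o shift (z + s *: e)) (h *: e) - g (z + s *: e))).
  apply/funext => h /=; rewrite /shift.
  by rewrite -[h *: 1]/(h * 1) mulr1 scalerDl addrCA addrA.
split; first by move: H; rewrite /derivable E.
by rewrite /derive E.
Qed.

Lemma step_bound (g : V -> R) (z e : V) t B :
  (forall x v, derivable g x v) ->
  (forall s, `|s| <= `|t| -> `|derive g (z + s *: e) e| <= B) ->
  `|g (z + t *: e) - g z| <= B * `|t|.
Proof.
move=> dg hb.
pose h := fun s : R => g (z + s *: e).
have hd (s : R) : is_derive s (1 : R) h (derive g (z + s *: e) e) := line_derive (dg _ _).
have hc : continuous h.
  move=> s; apply: differentiable_continuous; apply/derivable1_diffP.
  by case: (hd s).
have h0 : h 0 = g z by rewrite /h scale0r addr0.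
have -> : g (z + t *: e) = h t by [].
rewrite -h0.
case: (leP 0 t) => t0.
  have [c cI E] := MVT_segment t0 (fun x _ => hd x) (continuous_subspaceT hc).
  rewrite E subr0 normrM ler_wpM2r //; apply: hb.
  move: cI; rewrite in_itv /= => /andP[c0 ct].
  by rewrite !ger0_norm // (le_trans c0 ct).
have t0' : t <= 0 by apply: ltW.
have [c cI E] := MVT_segment t0' (fun x _ => hd x) (continuous_subspaceT hc).
rewrite distrC E sub0r normrM normrN ler_wpM2r //; apply: hb.
move: cI; rewrite in_itv /= => /andP[tc c0].
by rewrite !ler0_norm // lerN2.
Qed.

Definition ev (j : 'I_d) : V := delta_mx 0 j.

Lemma smooth_lip (g : V -> R) (a : V) :
  (forall x v, derivable g x v) -> (forall v, continuous (fun x => derive g x v)) ->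
  exists L, \forall x \near a, `|g x - g a| <= L * enormr (x - a).
Proof.
move=> dg cg.
pose D j x := derive g x (ev j).
have nearD : \forall x \near a, forall j, `|D j a - D j x| < 1.
  apply: (@filter_forall _ _ (fun j x => `|D j a - D j x| < 1) (nbhs a)) => j.
  by move: (cg (ev j) a) => /cvgr_dist_lt /(_ _ (@ltr01 R)).
move/nbhs_ballP: nearD => [e e0 He].
exists (\sum_j (`|D j a| + 1)).
apply/nbhs_ballP; exists e => // x /rV_ball xe.
pose z (k : nat) : V := \row_j (if (j < k)%N then x 0 j else a 0 j).
have z0 : z 0%N = a by apply/rowP => j; rewrite mxE.
have zd : z d = x by apply/rowP => j; rewrite mxE ltn_ord.
have zS (k : 'I_d) : z k.+1 = z k + (x 0 k - a 0 k) *: ev k.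
  apply/rowP => j; rewrite !mxE ltnS leq_eqVlt eqxx /=.
  case: (eqVneq j k) => [->|jk] /=; first by rewrite eqxx ltnn /= mulr1 addrC subrK.
  have jk' : (nat_of_ord j == nat_of_ord k) = false by exact: negbTE.
  by rewrite jk' /= mulr0 addr0.
have zball (k : 'I_d) s : `|s| <= `|x 0 k - a 0 k| -> ball a e (z k + s *: ev k).
  move=> hs; apply: ball_rV => // j; rewrite !mxE /=.
  case: (eqVneq j k) => [->|jk] /=.
    by rewrite ltnn mulr1 addrAC subrr add0r; apply: le_lt_trans hs _; exact: xe.
  rewrite mulr0 addr0; case: ifP => _; first exact: xe.
  by rewrite subrr normr0.
rewrite -{1}zd -{1}z0 -(telescope_sumr (fun k => g (z k)) (leq0n d)) big_mkord.
apply: le_trans (ler_norm_sum _ _ _) _.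
rewrite big_distrl /=; apply: ler_sum => k _.
rewrite zS; apply: le_trans.
  apply: (step_bound (B := `|D k a| + 1)) => // s hs.
  have := He _ (zball k s hs) k.
  move=> H; rewrite -/(D k _).
  have E : D k (z k + s *: ev k) = D k a - (D k a - D k (z k + s *: ev k)).
    by rewrite opprB addrCA subrr addr0.
  rewrite E; apply: le_trans (ler_normB _ _) _.
  by rewrite lerD2l ltW.
apply: ler_wpM2l; first by rewrite addr_ge0.
by have := coord_le_enormr (x - a) k; rewrite !mxE.
Qed.

End Near.

Section Lip.
Variables (R : realType) (d : nat) (a : 'rV[R]_d).
Local Notation V := 'rV[R]_d.

Lemma nearS1 (P S : V -> Prop) :
  (\forall x \near a, P x) -> (forall x, P x -> S x) -> \forall x \near a, S x.
Proof. by move=> HP H; apply: filterS HP. Qed.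

Lemma nearS2 (P Q S : V -> Prop) :
  (\forall x \near a, P x) -> (\forall x \near a, Q x) ->
  (forall x, P x -> Q x -> S x) -> \forall x \near a, S x.
Proof. move=> HP HQ H; exact: (filterS2 _ H HP HQ). Qed.

Lemma nearT (P : V -> Prop) : (forall x, P x) -> \forall x \near a, P x.
Proof. move=> H; exact: (@nearW _ (nbhs a) P _ H). Qed.

Definition LipAt (f : V -> R) :=
  exists L, \forall x \near a, `|f x - f a| <= L * enormr (x - a).

Definition BndAt (f : V -> R) := exists B, \forall x \near a, `|f x| <= B.

Lemma LipAt_bnd f : LipAt f -> BndAt f.
Proof.
case=> L HL; exists (`|f a| + `|L|).
have H2 := near_small a (@ltr01 R).
apply: (nearS2 HL H2) => x h1 h2.
have E : f x = f a + (f x - f a) by rewrite addrC subrK.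
rewrite E; apply: le_trans (ler_normD _ _) _; rewrite lerD2l.
apply: le_trans h1 _; apply: le_trans (ler_norm _) _.
rewrite normrM (ger0_norm (enormr_ge0 _)) -{2}[`|L|]mulr1.
by rewrite ler_wpM2l // ltW.
Qed.

Lemma LipAt_cst c : LipAt (fun=> c).
Proof. by exists 0; apply: nearT => x; rewrite subrr normr0 mul0r. Qed.

Lemma LipAt_add f g : LipAt f -> LipAt g -> LipAt (fun x => f x + g x).
Proof.
case=> Lf Hf [Lg Hg]; exists (Lf + Lg).
apply: (nearS2 Hf Hg) => x h1 h2.
have -> : f x + g x - (f a + g a) = (f x - f a) + (g x - g a) by ring.
by apply: le_trans (ler_normD _ _) _; rewrite mulrDl lerD.
Qed.

Lemma LipAt_mul f g : LipAt f -> LipAt g -> LipAt (fun x => f x * g x).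
Proof.
move=> Hf0 Hg0; have [Bg HBg] := LipAt_bnd Hg0.
case: Hf0 => Lf Hf; case: Hg0 => Lg Hg.
exists (Lf * Bg + `|f a| * Lg).
apply: (nearS2 Hf (nearS2 Hg HBg (fun x h1 h2 => conj h1 h2))) => x h1 [h2 h3].
have -> : f x * g x - f a * g a = (f x - f a) * g x + f a * (g x - g a) by ring.
apply: le_trans (ler_normD _ _) _; rewrite !normrM.
have e0 := enormr_ge0 (x - a).
have -> : (Lf * Bg + `|f a| * Lg) * enormr (x - a) =
  (Lf * enormr (x - a)) * Bg + `|f a| * (Lg * enormr (x - a)) by ring.
apply: lerD; first by apply: ler_pM => //.
by apply: ler_wpM2l.
Qed.

Lemma LipAt_smooth g : smooth g -> LipAt g.
Proof.
move=> sg; have [dg cg] := sg 1%N.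
exact: (smooth_lip a dg cg).
Qed.

Lemma LipAt_pvec (y : V) k : LipAt (fun x => pvec (y - x) k 0).
Proof.
exists 1; apply: nearT => x; rewrite mul1r /pvec.
case: (split_ordP k) => k' ->.
  by rewrite !col_mxEu subrr normr0 enormr_ge0.
rewrite !col_mxEd !mxE.
have -> : y 0 k' - x 0 k' - (y 0 k' - a 0 k') = - (x 0 k' - a 0 k') by ring.
by rewrite normrN; have := coord_le_enormr (x - a) k'; rewrite !mxE.
Qed.

Lemma LipAt_fin (T : finType) (F : T -> V -> R) : (forall t, LipAt (F t)) ->
  exists2 L, 0 <= L & \forall x \near a, forall t, `|F t x - F t a| <= L * enormr (x - a).
Proof.
move=> H; have [Lf HLf] := choice H.
exists (\sum_t `|Lf t|); first by apply: sumr_ge0.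
apply: (nearS1 (@filter_forall _ _ (fun t x => `|F t x - F t a| <= Lf t * enormr (x - a)) (nbhs a) _ HLf)) => x Hx t.
apply: le_trans (Hx t) _; apply: ler_wpM2r; first exact: enormr_ge0.
apply: le_trans (ler_norm _) _.
by rewrite (bigD1 t) //= lerDl sumr_ge0.
Qed.

Lemma BndAt_fin (T : finType) (F : T -> V -> R) : (forall t, BndAt (F t)) ->
  exists2 B, 0 <= B & \forall x \near a, forall t, `|F t x| <= B.
Proof.
move=> H; have [Bf HBf] := choice H.
exists (\sum_t `|Bf t|); first by apply: sumr_ge0.
apply: (nearS1 (@filter_forall _ _ (fun t x => `|F t x| <= Bf t) (nbhs a) _ HBf)) => x Hx t.
apply: le_trans (Hx t) _; apply: le_trans (ler_norm _) _.
by rewrite (bigD1 t) //= lerDl sumr_ge0.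
Qed.

Lemma BndAt_cont (f : V -> R) : {for a, continuous f} -> BndAt f.
Proof.
move=> cf; exists (`|f a| + 1).
move: cf => /cvgr_dist_lt /(_ _ (@ltr01 R)) H.
apply: (nearS1 H) => x hx.
have E : f x = f a - (f a - f x) by rewrite opprB addrCA subrr addr0.
by rewrite E; apply: le_trans (ler_normB _ _) _; rewrite lerD2l ltW.
Qed.

End Lip.

Section Mx.
Variable R : realType.

Lemma sigma_bound n (M : 'M[R]_n) c : c <= sigma_min M ->
  forall w, c * enormc w <= enormc (M *m w).
Proof.
move=> hc w.
have [->|w0] := eqVneq w 0; first by rewrite mulmx0 enormc0 mulr0.
have nw0 : 0 < enormc w.
  rewrite lt_def enormc_ge0 andbT; apply/eqP => /enormc_eq0 H; by rewrite H eqxx in w0.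
pose v := (enormc w)^-1 *: w.
have nv : enormc v = 1 by rewrite enormcZ ger0_norm ?invr_ge0 ?enormc_ge0 // mulVf // gt_eqF.
have : sigma_min M <= enormc (M *m v).
  apply: inf_lbound.
    by exists 0 => _ [y _ <-]; exact: enormc_ge0.
  by exists v.
rewrite /v -scalemxAr enormcZ ger0_norm ?invr_ge0 ?enormc_ge0 //.
move=> H; have := le_trans hc H.
by rewrite mulrC -ler_pdivlMr // mulrC.
Qed.

Lemma sigma_unit n (M : 'M[R]_n) c : 0 < c -> c <= sigma_min M -> M \in unitmx.
Proof.
move=> c0 hc; rewrite unitmxE unitfE; apply/negP => /eqP hdet.
have /det0P [v v0 hv] : \det M^T == 0 by rewrite det_tr hdet.
have hw : M *m v^T = 0 by rewrite -[M]trmxK -trmx_mul hv trmx0.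
have := sigma_bound hc v^T; rewrite hw enormc0.
rewrite pmulr_rle0 // => hn.
have : enormc v^T = 0 by apply/eqP; rewrite eq_le hn enormc_ge0.
move/enormc_eq0 => /(congr1 trmx); rewrite trmxK trmx0 => hv0.
by rewrite hv0 eqxx in v0.
Qed.

Lemma inv_bound n (M : 'M[R]_n) c : 0 < c -> c <= sigma_min M ->
  forall y : 'cV_n, enormc (invmx M *m y) <= enormc y / c.
Proof.
move=> c0 hc y; rewrite ler_pdivlMr // mulrC.
have := sigma_bound hc (invmx M *m y).
by rewrite mulmxA mulmxV ?mul1mx //; exact: sigma_unit hc.
Qed.

Lemma sum_ord_bound n (f : 'I_n -> R) B : (forall i, `|f i| <= B) ->
  `|\sum_i f i| <= n%:R * B.
Proof.
move=> H; apply: le_trans (ler_norm_sum _ _ _) _.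
apply: le_trans (ler_sum _ (fun i _ => H i)) _.
by rewrite sumr_const card_ord mulr_natl.
Qed.

Lemma diff_sum N (S T : {set 'I_N}) (f g : 'I_N -> R) c :
  (forall i, `|(if i \in S then f i else 0) - (if i \in T then g i else 0)| <= c) ->
  `|\sum_(i in S) f i - \sum_(i in T) g i| <= N%:R * c.
Proof.
move=> H; rewrite (big_mkcond (fun i => i \in S)) (big_mkcond (fun i => i \in T)) /=.
by rewrite -sumrB; apply: sum_ord_bound.
Qed.

Lemma set_sum_bound N (S : {set 'I_N}) (f : 'I_N -> R) c : 0 <= c ->
  (forall i, i \in S -> `|f i| <= c) -> `|\sum_(i in S) f i| <= N%:R * c.
Proof.
move=> c0 H; rewrite (big_mkcond (fun i => i \in S)) /=.
by apply: sum_ord_bound => i; case: ifP => hi; [exact: H|rewrite normr0].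
Qed.

Lemma case_bound (inN inO : bool) (tn to fn fo fa : R) L K' en eo :
  0 <= en -> 0 <= eo -> 0 <= L -> 0 <= K' ->
  (inN -> inO -> tn - to = fn - fo) ->
  `|fn - fa| <= L * en -> `|fo - fa| <= L * eo ->
  (inN -> ~~ inO -> `|tn| <= K' * en) -> (inO -> ~~ inN -> `|to| <= K' * eo) ->
  `|(if inN then tn else 0) - (if inO then to else 0)| <= (L + K') * (eo + en).
Proof.
move=> en0 eo0 L0 K0 hc hfn hfo hn ho.
have s0 : 0 <= eo + en by rewrite addr_ge0.
case: inN inO hc hn ho => [] [] /= hc hn ho.
- rewrite hc //.
  have -> : fn - fo = (fn - fa) - (fo - fa) by ring.
  apply: le_trans (ler_normB _ _) _.
  apply: le_trans (lerD hfn hfo) _.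
  have : 0 <= K' * (eo + en) by rewrite mulr_ge0.
  lra.
- rewrite subr0; apply: le_trans (hn erefl erefl) _.
  have : 0 <= L * (eo + en) by rewrite mulr_ge0.
  have : K' * en <= K' * (eo + en) by rewrite ler_wpM2l // lerDr.
  lra.
- rewrite sub0r normrN; apply: le_trans (ho erefl erefl) _.
  have : 0 <= L * (eo + en) by rewrite mulr_ge0.
  have : K' * eo <= K' * (eo + en) by rewrite ler_wpM2l // lerDl.
  lra.
- by rewrite subr0 normr0 mulr_ge0 // addr_ge0.
Qed.

Lemma MLS_M_entry d N xs dw eta (S : {set 'I_N}) (x : 'rV[R]_d) k l :
  MLS_M xs dw eta S x k l = \sum_(i in S) mod_weight xs dw eta i x *
     (pvec (xs i - x) k 0 * pvec (xs i - x) l 0).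
Proof.
rewrite /MLS_M summxE; apply: eq_bigr => i _.
by rewrite mxE mxE big_ord1 (mxE trmx_key).
Qed.

Lemma MLS_b_entry d N xs dw eta u (S : {set 'I_N}) (x : 'rV[R]_d) k :
  MLS_b xs dw eta u S x k 0 = \sum_(i in S) mod_weight xs dw eta i x * u i *
     pvec (xs i - x) k 0.
Proof.
by rewrite /MLS_b summxE; apply: eq_bigr => i _; rewrite mxE.
Qed.

End Mx.

Lemma prod3_le (R : realType) (x y z X Y Z : R) :
  `|x| <= X -> `|y| <= Y -> `|z| <= Z -> `|x * y * z| <= X * Y * Z.
Proof.
move=> hx hy hz; rewrite !normrM.
apply: ler_pM => //; exact: ler_pM.
Qed.

Theorem mainTheorem1 (R : realType) (d N : nat) (xs : 'I_N -> 'rV[R]_d)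
  (cells : {set {set 'I_N}}) (So Sn : {set 'I_N}) (xstar : 'rV[R]_d)
  (dw : 'rV[R]_d -> R) (eta : 'I_N -> 'rV[R]_d -> R) (u : 'I_N -> R) :
  conforming_mesh xs cells ->
  common_facet d cells So Sn ->
  closed_cell xs (So :&: Sn) xstar ->
  weight_function dw ->
  let No := ring1 cells So in
  let Nn := ring1 cells Sn in
  let Nc := No :&: Nn in
  let Nr := No :\: Nc in
  let Na := Nn :\: Nc in
  (* (i) smoothness of eta_i d near x* in T_o u T_n for common nodes *)
  (exists2 delta : R, 0 < delta &
     exists g : 'I_N -> 'rV[R]_d -> R, forall i, i \in Nc ->
       smooth (g i) /\
       forall x, (open_cell xs So x \/ open_cell xs Sn x) ->
         enormr (x - xstar) < delta -> g i x = eta i x * dw (xs i - x)) ->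
  (* (ii) eta is locally diminishing *)
  (exists2 K : R, 0 < K & exists2 delta : R, 0 < delta &
     (forall i x, i \in Nr -> open_cell xs So x -> enormr (x - xstar) < delta ->
        `|eta i x| <= K * enormr (x - xstar)) /\
     (forall i x, i \in Na -> open_cell xs Sn x -> enormr (x - xstar) < delta ->
        `|eta i x| <= K * enormr (x - xstar))) ->
  (* (iii) non-degenerate nodes near x* *)
  (exists2 c : R, 0 < c & exists2 delta : R, 0 < delta &
     forall x, enormr (x - xstar) < delta ->
       (open_cell xs So x -> c <= sigma_min (MLS_M xs dw eta No x)) /\
       (open_cell xs Sn x -> c <= sigma_min (MLS_M xs dw eta Nn x))) ->
  (* conclusion: the jump of [u_hat; grad u_hat] across F is O(eps) *)
  exists2 C : R, 0 < C & exists2 delta : R, 0 < delta &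
    forall xo xn, open_cell xs So xo -> open_cell xs Sn xn ->
      enormr (xo - xstar) < delta -> enormr (xn - xstar) < delta ->
      enormc (MLS_recon xs dw eta u Nn xn - MLS_recon xs dw eta u No xo)
        <= C * (enormr (xo - xstar) + enormr (xn - xstar)).
Proof.
have prod2_le (x y X Y : R) : `|x| <= X -> `|y| <= Y -> `|x * y| <= X * Y.
  by move=> hx hy; rewrite normrM; apply: ler_pM.
move=> _ _ _ [sdw _ _] No Nn Nc Nr Na [del1 del10 [g Hg]]
  [K K0 [del2 del20 [HKr HKa]]] [c c0 [del3 del30 Hc]].
have cdw : continuous dw by exact: (sdw 0%N).
have hNc i : (i \in Nc) = (i \in No) && (i \in Nn) by rewrite /Nc finset.in_setI.
have hNr i : (i \in Nr) = (i \in No) && ~~ (i \in Nn).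
  by rewrite /Nr /Nc finset.in_setD finset.in_setI; case: (i \in No); case: (i \in Nn).
have hNa i : (i \in Na) = (i \in Nn) && ~~ (i \in No).
  by rewrite /Na /Nc finset.in_setD finset.in_setI; case: (i \in No); case: (i \in Nn).
pose F1 (t : 'I_N * 'I_(1 + d) * 'I_(1 + d)) (x : 'rV[R]_d) :=
  if t.1.1 \in Nc then g t.1.1 x * (pvec (xs t.1.1 - x) t.1.2 0 * pvec (xs t.1.1 - x) t.2 0)
  else 0.
have [L1 L10 HL1] : exists2 L, 0 <= L & \forall x \near xstar,
    forall t, `|F1 t x - F1 t xstar| <= L * enormr (x - xstar).
  apply: (@LipAt_fin R d xstar _ F1) => -[[i k] l]; unfold F1; simpl; case hi: (i \in Nc); last exact: LipAt_cst.
  apply: LipAt_mul; first exact: LipAt_smooth (Hg i hi).1.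
  by apply: LipAt_mul; exact: LipAt_pvec.
pose F2 (t : 'I_N * 'I_(1 + d)) (x : 'rV[R]_d) :=
  if t.1 \in Nc then g t.1 x * u t.1 * pvec (xs t.1 - x) t.2 0 else 0.
have [L2 L20 HL2] : exists2 L, 0 <= L & \forall x \near xstar,
    forall t, `|F2 t x - F2 t xstar| <= L * enormr (x - xstar).
  apply: (@LipAt_fin R d xstar _ F2) => -[i k]; rewrite /F2 /=; case hi: (i \in Nc); last exact: LipAt_cst.
  apply: LipAt_mul; last exact: LipAt_pvec.
  apply: LipAt_mul; first exact: LipAt_smooth (Hg i hi).1.
  exact: LipAt_cst.
have [Pb Pb0 HPb] : exists2 B, 0 <= B & \forall x \near xstar,
    forall t : 'I_N * 'I_(1 + d), `|pvec (xs t.1 - x) t.2 0| <= B.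
  by apply: BndAt_fin => -[i k]; apply: LipAt_bnd; exact: LipAt_pvec.
have [Gb Gb0 HGb] : exists2 B, 0 <= B & \forall x \near xstar,
    forall i : 'I_N, `|if i \in Nc then g i x else 0| <= B.
  apply: BndAt_fin => i; apply: LipAt_bnd; case hi: (i \in Nc); last exact: LipAt_cst.
  exact: LipAt_smooth (Hg i hi).1.
have [Db Db0 HDb] : exists2 B, 0 <= B & \forall x \near xstar,
    forall i : 'I_N, `|dw (xs i - x)| <= B.
  apply: BndAt_fin => i; apply: BndAt_cont.
  apply: continuous_comp; last exact: cdw.
  exact: (cvgB (cvg_cst _) cvg_id).
pose del0 := Num.min del1 (Num.min del2 (Num.min del3 1)).
have del00 : 0 < del0 by rewrite /del0 !lt_min del10 del20 del30 ltr01.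
have Hnear : \forall x \near xstar,
   [/\ (forall t, `|F1 t x - F1 t xstar| <= L1 * enormr (x - xstar)),
        (forall t, `|F2 t x - F2 t xstar| <= L2 * enormr (x - xstar)),
        (forall t : 'I_N * 'I_(1 + d), `|pvec (xs t.1 - x) t.2 0| <= Pb),
        (forall i : 'I_N, `|if i \in Nc then g i x else 0| <= Gb) &
        (forall i : 'I_N, `|dw (xs i - x)| <= Db) /\
        enormr (x - xstar) < del0].
  apply: (nearS2 HL1 (nearS2 HL2 (nearS2 HPb (nearS2 HGb (nearS2 HDb (near_small xstar del00)
     (fun x h1 h2 => conj h1 h2)) (fun x h1 h2 => conj h1 h2)) (fun x h1 h2 => conj h1 h2))
     (fun x h1 h2 => conj h1 h2))).
  by move=> x h1 [h2 [h3 [h4 [h5 h6]]]]; split.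
have [del del_gt0 Hdel] := near_enormr Hnear.
pose Ub := \sum_i `|u i|.
have hUb i : `|u i| <= Ub by rewrite /Ub (bigD1 i) //= lerDl sumr_ge0.
have Ub0 : 0 <= Ub by rewrite sumr_ge0.
have K0' : 0 <= K by exact: ltW.
pose K1 := K * Db * (Pb * Pb).
pose C1 := N%:R * (L1 + K1).
pose K2 := K * Db * (Ub * Pb).
pose C2 := N%:R * (L2 + K2).
pose C3 := N%:R * (Gb * Ub * Pb + K * Db * Ub * Pb).
have K10 : 0 <= K1 by rewrite /K1 !mulr_ge0.
have K20 : 0 <= K2 by rewrite /K2 !mulr_ge0.
have C10 : 0 <= C1 by rewrite /C1 mulr_ge0 // addr_ge0.
have C20 : 0 <= C2 by rewrite /C2 mulr_ge0 // addr_ge0.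
have C30 : 0 <= C3 by rewrite /C3 mulr_ge0 // addr_ge0 // !mulr_ge0.
pose Y := (1 + d)%:R * C3 / c.
have Y0 : 0 <= Y.
  by apply: mulr_ge0; [exact: mulr_ge0|rewrite invr_ge0 ltW].
pose C := (1 + d)%:R * (C2 + (1 + d)%:R * (C1 * Y)) / c + 1.
have C0' : 0 <= (1 + d)%:R * (C2 + (1 + d)%:R * (C1 * Y)) / c.
  apply: mulr_ge0; last by rewrite invr_ge0 ltW.
  by apply: mulr_ge0 => //; apply: addr_ge0 => //; apply: mulr_ge0 => //; exact: mulr_ge0.
exists C; first by rewrite /C ltr_pwDr.
exists del => // xo xn hxo hxn heo hen.
have [Po1 Po2 Po3 Po4 [Po5 Po6]] := Hdel xo heo.
have [Pn1 Pn2 Pn3 Pn4 [Pn5 Pn6]] := Hdel xn hen.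
move: Po6 Pn6; rewrite /del0 !lt_min => /and4P[eo1 eo2 eo3 eo4] /and4P[en1 en2 en3 en4].
set eo := enormr (xo - xstar) in eo1 eo2 eo3 eo4 Po1 Po2 *.
set en := enormr (xn - xstar) in en1 en2 en3 en4 Pn1 Pn2 *.
have eo0 : 0 <= eo by exact: enormr_ge0.
have en0 : 0 <= en by exact: enormr_ge0.
have hWo i : i \in Nc -> mod_weight xs dw eta i xo = g i xo.
  by move=> hi; rewrite /mod_weight ((Hg i hi).2 xo (or_introl hxo) eo1).
have hWn i : i \in Nc -> mod_weight xs dw eta i xn = g i xn.
  by move=> hi; rewrite /mod_weight ((Hg i hi).2 xn (or_intror hxn) en1).
have cA := (Hc xn en3).2 hxn.
have cB := (Hc xo eo3).1 hxo.
have hP2 (x : 'rV[R]_d) i k l : (forall t : 'I_N * 'I_(1 + d), `|pvec (xs t.1 - x) t.2 0| <= Pb) ->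
    `|pvec (xs i - x) k 0 * pvec (xs i - x) l 0| <= Pb * Pb.
  by move=> H; apply: prod2_le; [exact: (H (i, k))|exact: (H (i, l))].
have hAB k l : `|MLS_M xs dw eta Nn xn k l - MLS_M xs dw eta No xo k l| <= C1 * (eo + en).
  rewrite !MLS_M_entry /C1 -mulrA; apply: diff_sum => i.
  apply: (case_bound (fn := F1 (i, k, l) xn) (fo := F1 (i, k, l) xo) (fa := F1 (i, k, l) xstar)) => //.
  - move=> hn ho; have hi : i \in Nc by rewrite hNc ho hn.
    by rewrite /F1 /= hi hWn // hWo.
  - move=> hn ho; have hi : i \in Na by rewrite hNa hn ho.
    have := prod2_le _ _ _ _ (prod2_le _ _ _ _ (HKa i xn hi hxn en2) (Pn5 i)) (hP2 xn i k l Pn3).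
    by have -> : K1 * en = K * en * Db * (Pb * Pb) by rewrite /K1; ring.
  - move=> ho hn; have hi : i \in Nr by rewrite hNr hn ho.
    have := prod2_le _ _ _ _ (prod2_le _ _ _ _ (HKr i xo hi hxo eo2) (Po5 i)) (hP2 xo i k l Po3).
    by have -> : K1 * eo = K * eo * Db * (Pb * Pb) by rewrite /K1; ring.
have hbb k : `|MLS_b xs dw eta u Nn xn k 0 - MLS_b xs dw eta u No xo k 0| <= C2 * (eo + en).
  rewrite !MLS_b_entry /C2 -mulrA; apply: diff_sum => i.
  apply: (case_bound (fn := F2 (i, k) xn) (fo := F2 (i, k) xo) (fa := F2 (i, k) xstar)) => //.
  - move=> hn ho; have hi : i \in Nc by rewrite hNc ho hn.
    by rewrite /F2 /= hi hWn // hWo.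
  - move=> hn ho; have hi : i \in Na by rewrite hNa hn ho.
    have := prod2_le _ _ _ _ (prod2_le _ _ _ _ (prod2_le _ _ _ _ (HKa i xn hi hxn en2) (Pn5 i)) (hUb i)) (Pn3 (i, k)).
    by have -> : K2 * en = K * en * Db * Ub * Pb by rewrite /K2; ring.
  - move=> ho hn; have hi : i \in Nr by rewrite hNr hn ho.
    have := prod2_le _ _ _ _ (prod2_le _ _ _ _ (prod2_le _ _ _ _ (HKr i xo hi hxo eo2) (Po5 i)) (hUb i)) (Po3 (i, k)).
    by have -> : K2 * eo = K * eo * Db * Ub * Pb by rewrite /K2; ring.
have hb' k : `|MLS_b xs dw eta u No xo k 0| <= C3.
  rewrite MLS_b_entry /C3; apply: set_sum_bound.
    by apply: addr_ge0; rewrite !mulr_ge0.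
  move=> i hio; case hin: (i \in Nn).
    have hi : i \in Nc by rewrite hNc hio hin.
    rewrite hWo //; have := Po4 i; rewrite hi => hg.
    apply: le_trans (prod2_le _ _ _ _ (prod2_le _ _ _ _ hg (hUb i)) (Po3 (i, k))) _.
    by rewrite lerDl !mulr_ge0.
  have hi : i \in Nr by rewrite hNr hio hin.
  have := prod2_le _ _ _ _ (prod2_le _ _ _ _ (prod2_le _ _ _ _ (HKr i xo hi hxo eo2) (Po5 i)) (hUb i)) (Po3 (i, k)).
  move=> H; apply: le_trans H _.
  have H2 : K * eo * Db * Ub * Pb <= K * Db * Ub * Pb.
    have -> : K * eo * Db * Ub * Pb = (K * Db * Ub * Pb) * eo by ring.
    by apply: ler_piMr; [rewrite !mulr_ge0|exact: ltW].
  by apply: le_trans H2 _; rewrite lerDr !mulr_ge0.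
set A := MLS_M xs dw eta Nn xn in cA hAB *.
set B := MLS_M xs dw eta No xo in cB hAB *.
set b := MLS_b xs dw eta u Nn xn in hbb *.
set b' := MLS_b xs dw eta u No xo in hbb hb' *.
have uA := sigma_unit c0 cA.
have uB := sigma_unit c0 cB.
pose y := invmx B *m b'.
have hBy : B *m y = b' by rewrite /y mulmxA mulmxV // mul1mx.
have hAy : invmx A *m (A *m y) = y by rewrite mulmxA mulVmx // mul1mx.
have E : MLS_recon xs dw eta u Nn xn - MLS_recon xs dw eta u No xo =
    invmx A *m (b - b' + (B - A) *m y).
  by rewrite mulmxBl hBy addrA subrK mulmxBr hAy.
rewrite E; apply: le_trans (inv_bound c0 cA _) _.
have hy l : `|y l 0| <= Y.
  apply: le_trans (coord_le_enormc y l) _.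
  apply: le_trans (inv_bound c0 cB b') _.
  rewrite /Y ler_pM2r ?invr_gt0 //.
  apply: le_trans (enormc_le_sum _) _; apply: le_trans (ler_norm _) _.
  by apply: sum_ord_bound => k; rewrite normr_id.
have hz : enormc (b - b' + (B - A) *m y) <=
    (1 + d)%:R * (C2 * (eo + en) + (1 + d)%:R * (C1 * (eo + en) * Y)).
  apply: le_trans (enormc_le_sum _) _; apply: le_trans (ler_norm _) _.
  apply: sum_ord_bound => k; rewrite normr_id !mxE.
  apply: le_trans (ler_normD _ _) _; apply: lerD; first exact: hbb.
  apply: sum_ord_bound => l; rewrite !mxE.
  rewrite (_ : \sum_j invmx B l j * b' j 0 = y l 0); last by rewrite /y mxE.
  apply: (prod2_le _ _ _ _ _ (hy l)); by rewrite distrC.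
apply: (@le_trans _ _ ((1 + d)%:R * (C2 * (eo + en) + (1 + d)%:R * (C1 * (eo + en) * Y)) / c)).
  by rewrite ler_pM2r ?invr_gt0.
have -> : C * (eo + en) = (1 + d)%:R * (C2 * (eo + en) + (1 + d)%:R * (C1 * (eo + en) * Y)) / c
   + (eo + en) by rewrite /C; ring.
by rewrite lerDl addr_ge0.
Qed.
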